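(* Let $\mathcal G$ and $\mathcal G'$ be two directed Eulerian multigraphs on a finite vertex set $V\ni v_0$, where $j_{u,v}$ and $j'_{u,v}$ denote the multiplicities of the directed edge $\langle u,v\rangle$ in $\mathcal G$ and $\mathcal G'$. Suppose that for all $u,v$, $j'_{u,v}\ge1$ if and only if $j_{u,v}\ge1$, and that $j_{u,v}\ge j'_{u,v}$. Then $$\frac{\mathrm{ar}_{v_0}(\mathcal G')}{\mathrm{ar}_{v_0}(\mathcal G)}\ge\prod_{u\ne v:\ j_{u,v}\ge1}\frac{j'_{u,v}}{j_{u,v}}.$$
   Context: A directed multigraph is Eulerian if it has a circuit traversing every directed edge exactly once (equivalently, connected and in-degree equals out-degree at every vertex). Parallel edges are distinguishable. $\mathrm{ar}_{v_0}(\mathcal G)$ is the number of arborescences of $\mathcal G$ rooted at $v_0$: spanning sub-multigraphs (choosing specific edge copies) forming directed trees in which every vertex $v\ne v_0$ has a unique directed path to $v_0$. *)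

(* Defs.v *)
From mathcomp Require Import all_boot all_order all_algebra.
Set Implicit Arguments. Unset Strict Implicit. Unset Printing Implicit Defensive.

(* A directed multigraph on a finite vertex set V is given by its multiplicity
   function j : V -> V -> nat; j u v = number of (distinguishable) copies of
   the directed edge <u,v>. *)

Definition out_deg (V : finType) (j : V -> V -> nat) (v : V) : nat :=
  \sum_(w : V) j v w.
Definition in_deg (V : finType) (j : V -> V -> nat) (v : V) : nat :=
  \sum_(u : V) j u v.

Definition mg_connected (V : finType) (j : V -> V -> nat) : Prop :=
  forall u v : V, connect (fun a b => (0 < j a b) || (0 < j b a)) u v.

Definition eulerian (V : finType) (j : V -> V -> nat) : Prop :=
  mg_connected j /\ forall v : V, in_deg j v = out_deg j v.

(* An arborescence rooted at v0 is determined by its underlying tree,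
   encoded by the parent map p (edge <v, p v> for v <> v0; p v0 = v0 and
   every vertex reaches v0 by iterating p), together with a choice of one of
   the j v (p v) copies of each tree edge. *)
Definition is_arb_parent (V : finType) (v0 : V) (p : {ffun V -> V}) : bool :=
  (p v0 == v0) && [forall v : V, [exists n : 'I_#|V|.+1, iter n p v == v0]].

Definition ar (V : finType) (j : V -> V -> nat) (v0 : V) : nat :=
  \sum_(p : {ffun V -> V} | is_arb_parent v0 p) \prod_(v : V | v != v0) j v (p v).

(* Main.v *)
Require Import Defs.
Set Warnings "-notation-overridden,-ambiguous-paths".
From mathcomp Require Import all_boot all_order all_algebra.
Import Order.TTheory GRing.Theory Num.Theory.

Fixpoint reach (V : finType) (e : rel V) (v0 : V) (n : nat) (v : V) : bool :=
  if n is n'.+1 then reach V e v0 n' v || [exists w, e v w && reach V e v0 n' w]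
  else v == v0.
Arguments reach {V}.

Lemma path_reach (V : finType) (e : rel V) (v0 : V) s : forall v,
  path e v s -> last v s = v0 -> reach e v0 (size s) v.
Proof.
elim: s => [|w s IH] v /=; first by move=> _ ->.
move=> /andP[evw Hp] Hl; apply/orP; right; apply/existsP; exists w.
by rewrite evw IH.
Qed.

Lemma exists_arb (V : finType) (v0 : V) (e : rel V) :
  (forall v, connect e v v0) ->
  exists p : {ffun V -> V}, is_arb_parent v0 p && [forall v, (v != v0) ==> e v (p v)].
Proof.
move=> Hc.
have Hr : forall v, exists n, (n < #|V|) && reach e v0 n v.
  move=> v; have /connectP [s Hp Hl] := Hc v.
  move: Hl; case/shortenP: Hp => s' Hp' Hu _ Hl.
  exists (size s'); rewrite path_reach // andbT.
  have := max_card (mem (v :: s')); rewrite (card_uniqP Hu) /=. done.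
pose d v := ex_minn (Hr v).
have Hd1 : forall v, (d v < #|V|) && reach e v0 (d v) v.
  by move=> v; rewrite /d; case: ex_minnP.
have Hd2 : forall v n, reach e v0 n v -> d v <= n.
  move=> v n Hn; case: (ltnP n #|V|) => Hn2.
    by rewrite /d; case: ex_minnP => m _ Hm; apply: Hm; rewrite Hn2 Hn.
  by case/andP: (Hd1 v) => H _; apply: ltnW; apply: leq_trans Hn2.
have Hst : forall v, v != v0 -> exists w, e v w && (d w < d v).
  move=> v nv; case/andP: (Hd1 v); case E: (d v) => [|k] _ /=.
    by rewrite (negbTE nv).
  case/orP => [Hk|/existsP[w /andP[evw Hw]]].
    by have := Hd2 _ _ Hk; rewrite E ltnn.
  by exists w; rewrite evw ltnS Hd2.
pose p := [ffun v => if v == v0 then v0 else odflt v0 [pick w | e v w && (d w < d v)]].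
have Hp : forall v, v != v0 -> e v (p v) && (d (p v) < d v).
  move=> v nv; rewrite ffunE (negbTE nv); case: pickP => [w //|H].
  by case: (Hst v nv) => w; rewrite H.
have Hp0 : p v0 = v0 by rewrite ffunE eqxx.
have Hit : forall n v, d v <= n -> iter n p v = v0.
  elim=> [|n IH] v.
    rewrite leqn0 => /eqP H; case/andP: (Hd1 v); rewrite H /=.
    by move=> _ /eqP.
  move=> Hv; rewrite iterSr; case: (eqVneq v v0) => [->|nv].
    by rewrite Hp0 IH // (leq_trans (Hd2 v0 0 _)) //= eqxx.
  by apply: IH; case/andP: (Hp v nv) => _ H; rewrite -ltnS (leq_trans H).
exists p; apply/andP; split; last first.
  by apply/forallP => v; apply/implyP => nv; case/andP: (Hp v nv).
rewrite /is_arb_parent Hp0 eqxx /=; apply/forallP => v; apply/existsP.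
have Hlt : d v < #|V|.+1 by case/andP: (Hd1 v) => H _; apply: ltnW.
by exists (Ordinal Hlt); rewrite /= Hit.
Qed.
Lemma eul_reach (V : finType) (j : V -> V -> nat) (v0 : V) :
  eulerian j -> forall v, connect (fun a b => 0 < j a b) v v0.
Proof.
case=> Hc Hdeg.
set e := (fun a b => 0 < j a b).
pose S := [set v | connect e v v0].
have Hin : forall a b, b \in S -> a \notin S -> j a b = 0.
  move=> a b; rewrite !inE => Hb; apply: contraNeq; rewrite -lt0n => Hab.
  by apply: connect_trans Hb; apply: connect1.
have Hsum : \sum_(v in S) \sum_(w | w \notin S) j v w = 0.
  have E1 : \sum_(v in S) in_deg j v = \sum_(v in S) \sum_(u in S) j u v.
    apply: eq_bigr => v vS; rewrite /in_deg (bigID (fun u => u \in S)) /=.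
    by rewrite [X in _ + X]big1 ?addn0 // => u uS; apply: Hin.
  have E2 : \sum_(v in S) out_deg j v =
      \sum_(v in S) \sum_(w in S) j v w + \sum_(v in S) \sum_(w | w \notin S) j v w.
    rewrite -big_split /=; apply: eq_bigr => v vS.
    by rewrite /out_deg (bigID (fun u => u \in S)).
  have E3 : \sum_(v in S) \sum_(u in S) j u v = \sum_(v in S) \sum_(w in S) j v w.
    by rewrite exchange_big.
  have : \sum_(v in S) in_deg j v = \sum_(v in S) out_deg j v.
    by apply: eq_bigr => v _; apply: Hdeg.
  rewrite E1 E2 E3 => /eqP; rewrite -{1}[X in X == _]addn0 eqn_add2l eq_sym.
  by move/eqP.
have Hout : forall a b, a \in S -> b \notin S -> j a b = 0.
  move=> a b aS bS; apply/eqP; move: Hsum => /eqP; rewrite sum_nat_eq0.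
  move=> /forallP/(_ a); rewrite aS /= sum_nat_eq0 => /forallP/(_ b).
  by rewrite bS.
have Hcl : closed (fun a b => (0 < j a b) || (0 < j b a)) S.
  move=> x y /orP[] H.
    case xS: (x \in S); case yS: (y \in S) => //.
      by rewrite Hout ?xS ?yS in H.
    by rewrite Hin ?xS ?yS in H.
  case xS: (x \in S); case yS: (y \in S) => //.
    by rewrite Hin ?xS ?yS in H.
  by rewrite Hout ?xS ?yS in H.
move=> v; have := closed_connect Hcl (Hc v v0).
by rewrite !inE connect0 => ->.
Qed.

Local Open Scope ring_scope.

Theorem claim4p7 (V : finType) (v0 : V) (j j' : V -> V -> nat) :
  eulerian j -> eulerian j' ->
  (forall u v : V, (1 <= j' u v)%N = (1 <= j u v)%N) ->
  (forall u v : V, (j' u v <= j u v)%N) ->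
  \prod_(e : V * V | (e.1 != e.2) && (1 <= j e.1 e.2)%N)
      ((j' e.1 e.2)%:R / (j e.1 e.2)%:R : rat)
    <= (ar j' v0)%:R / (ar j v0)%:R.
Proof.
move=> Ej _ _ Hle.
set f := fun e : V * V => ((j' e.1 e.2)%:R / (j e.1 e.2)%:R : rat).
set P := \prod_(e : V * V | _) _.
have f01 : forall e : V * V, (1 <= j e.1 e.2)%N -> 0 <= f e <= 1.
  move=> e He; rewrite /f divr_ge0 ?ler0n //= ler_pdivrMr ?ltr0n // mul1r.
  by rewrite ler_nat.
have P0 : 0 <= P by apply: prodr_ge0 => e /andP[_ H]; case/andP: (f01 e H).
have Htree : forall p : {ffun V -> V}, is_arb_parent v0 p ->
    P * (\prod_(v | v != v0) j v (p v))%:R <= (\prod_(v | v != v0) j' v (p v))%:R.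
  move=> p Hp.
  case: (boolP [forall v, (v != v0) ==> (0 < j v (p v))%N]) => Hpos; last first.
    move/forallPn: Hpos => [v]; rewrite negb_imply -eqn0Ngt => /andP[nv /eqP z].
    by rewrite (bigD1 v) //= z mul0n mulr0 ler0n.
  have Hpos' : forall v, v != v0 -> (0 < j v (p v))%N.
    by move=> v nv; move/forallP/(_ v): Hpos; rewrite nv.
  have Hne : forall v, v != v0 -> p v != v.
    move=> v nv; apply/eqP => pv; case/andP: Hp => _ /forallP/(_ v)/existsP[n].
    by rewrite iter_fix // (negbTE nv).
  have HPle : P <= \prod_(v | v != v0) f (v, p v).
    rewrite /P (bigID (fun e : V * V => (e.1 != v0) && (e.2 == p e.1))) /=.
    have -> : \prod_(e : V * V | ((e.1 != e.2) && (1 <= j e.1 e.2)%N) &&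
                     ((e.1 != v0) && (e.2 == p e.1))) f e
              = \prod_(v | v != v0) f (v, p v).
      transitivity (\prod_(e : V * V | (e.1 != v0) && (e.2 == p e.1)) f (e.1, e.2)).
        apply: eq_bigl => -[a b] /=.
        case: (eqVneq a v0) => [->|na] /=; first by rewrite andbF.
        case: (eqVneq b (p a)) => [->|nb]; last by rewrite andbF.
      by rewrite eq_sym Hne // Hpos'.
      rewrite -(pair_big_dep (fun v => v != v0) (fun v w => w == p v)
                 (fun a b => f (a, b))) /=.
      by apply: eq_bigr => v _; rewrite big_pred1_eq.
    apply: ler_piMr.
      by apply: prodr_ge0 => v nv; case/andP: (f01 (v, p v) (Hpos' v nv)).
    by apply: prodr_ile1 => e /andP[/andP[_ H] _]; apply: f01.
  have -> : (\prod_(v | v != v0) j' v (p v))%:R =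
      \prod_(v | v != v0) f (v, p v) * (\prod_(v | v != v0) j v (p v))%:R :> rat.
    rewrite !natr_prod -big_split /=; apply: eq_bigr => v nv.
    by rewrite /f /= divfK // pnatr_eq0 -lt0n Hpos'.
  by apply: ler_wpM2r.
have Hsum : P * (ar j v0)%:R <= (ar j' v0)%:R.
  rewrite /ar !natr_sum mulr_sumr; apply: ler_sum => p Hp; exact: Htree.
have Har : (0 < ar j v0)%N.
  have [p /andP[Hp He]] := @exists_arb V v0 _ (@eul_reach V j v0 Ej).
  rewrite /ar (bigD1 p) //= ltn_addr // prodn_cond_gt0 // => v nv.
  by move/forallP/(_ v): He; rewrite nv.
by rewrite ler_pdivlMr ?ltr0n.
Qed.
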